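(* Consider the quality-aware crowdsensing role selection game with cross-quality data sharing described in the context. A strategy profile $(x^\ast,q^\ast)$ is an equilibrium if and only if its average sharing benefits $\boldsymbol\Phi=(\Phi_1,\dots,\Phi_K)$ satisfy $$\Phi_k=\widetilde{\Phi}_k(\boldsymbol\Phi)\triangleq\sum_{i=1}^{k}\frac{p\,h(q_i)\,|\widetilde{S}^{\mathrm R}_i(\boldsymbol\Phi)|}{\sum_{j=i}^{K}|\widetilde{S}^{\mathrm S}_j(\boldsymbol\Phi)|},\qquad\forall k\in\{1,\dots,K\}.$$
   Context: Users form a continuum; a user's type is $(v,c)\in[0,1]^2$, distributed uniformly on $[0,1]^2$. There are $K$ data qualities $0<q_1<\dots<q_K$; $f,g,h$ are increasing functions of quality; parameters $w>0$, $s\ge0$, $p\ge0$ (pure quality-based pricing, revenue sharing factor $\eta=1$). Each user chooses one of $(\mathrm S,q_k)$ (sensor of quality $q_k$), $(\mathrm R,q_k)$ (requester of quality $q_k$), $k=1,\dots,K$, or $\mathrm A$ (alien). Given $\boldsymbol\Phi=(\Phi_1,\dots,\Phi_K)$, payoffs are $\pi_{vc}(\mathrm S,q_k)=wvf(q_k)-cg(q_k)+\Phi_k$, $\pi_{vc}(\mathrm R,q_k)=wvf(q_k)-s-p\,h(q_k)$, $\pi_{vc}(\mathrm A)=0$. In cross-quality sharing, a requester of quality $q_i$ can obtain data from any sensor of quality $q_j\ge q_i$ (paying $p\,h(q_i)$), requests being spread uniformly over all such sensors; hence for market shares $S^{\mathrm S}_j,S^{\mathrm R}_i$ (sets of types choosing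 $(\mathrm S,q_j)$, $(\mathrm R,q_i)$; $|\cdot|$ Lebesgue measure) the induced average sharing benefit of a quality-$q_k$ sensor is $\Phi_k=\sum_{i=1}^k p\,h(q_i)|S^{\mathrm R}_i|/\sum_{j=i}^K|S^{\mathrm S}_j|$. A profile is an equilibrium if each type's option maximizes its payoff among all $2K+1$ options at the induced $\boldsymbol\Phi$ (ties on null sets ignored). For given $\boldsymbol\Phi$, $\widetilde{S}^{\mathrm S}_j(\boldsymbol\Phi)$ and $\widetilde{S}^{\mathrm R}_i(\boldsymbol\Phi)$ are the sets of types for which $(\mathrm S,q_j)$, resp. $(\mathrm R,q_i)$, is payoff-maximizing under $\boldsymbol\Phi$ (the best-response market shares). *)

(* Defs.v *)
From HB Require Import structures.
From mathcomp Require Import all_boot all_order all_algebra.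
From mathcomp Require Import all_classical all_reals all_analysis.
Set Implicit Arguments. Unset Strict Implicit. Unset Printing Implicit Defensive.
Import Order.TTheory GRing.Theory Num.Theory.
Local Open Scope classical_set_scope.
Local Open Scope ring_scope.

Inductive role (K : nat) : Type :=
| RoleS of 'I_K   (* sensor of quality q_k *)
| RoleR of 'I_K   (* requester of quality q_k *)
| RoleA.          (* alien *)
Arguments RoleA {K}.

Section Model.
Variable R : realType.

(* Lebesgue measure on R^2 (types (v,c)). *)
Definition leb2 : set (R * R) -> \bar R :=
  ((@lebesgue_measure R) \x (@lebesgue_measure R))%E.

Definition square : set (R * R) :=
  [set x | (0 <= x.1 <= 1) /\ (0 <= x.2 <= 1)].

Definition share (A : set (R * R)) : R := fine (leb2 (A `&` square)).

Variables (K : nat) (q : 'I_K -> R) (f g h : R -> R) (w s p : R).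

Definition payoff (Phi : 'I_K -> R) (x : R * R) (o : role K) : R :=
  match o with
  | RoleS k => w * x.1 * f (q k) - x.2 * g (q k) + Phi k
  | RoleR k => w * x.1 * f (q k) - s - p * h (q k)
  | RoleA => 0
  end.

Definition is_best (Phi : 'I_K -> R) (x : R * R) (o : role K) : Prop :=
  forall o' : role K, payoff Phi x o' <= payoff Phi x o.

(* average sharing benefit of a quality-q_k sensor, given the measures of the
   requester market shares shR and sensor market shares shS
   (division by 0 yields 0, MathComp's convention) *)
Definition avg_benefit (shR shS : 'I_K -> R) (k : 'I_K) : R :=
  \sum_(i < K | (i <= k)%N)
     p * h (q i) * shR i / (\sum_(j < K | (i <= j)%N) shS j).

Definition Phi_of (sigma : R * R -> role K) : 'I_K -> R :=
  avg_benefit (fun i => share (sigma @^-1` [set RoleR i]))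
              (fun j => share (sigma @^-1` [set RoleS j])).

Definition BR_S (Phi : 'I_K -> R) (j : 'I_K) : set (R * R) :=
  [set x | square x /\ is_best Phi x (RoleS j)].
Definition BR_R (Phi : 'I_K -> R) (i : 'I_K) : set (R * R) :=
  [set x | square x /\ is_best Phi x (RoleR i)].

Definition Phi_tilde (Phi : 'I_K -> R) : 'I_K -> R :=
  avg_benefit (fun i => share (BR_R Phi i)) (fun j => share (BR_S Phi j)).

Definition ae_best_response (sigma : R * R -> role K) (Phi : 'I_K -> R) : Prop :=
  leb2.-negligible [set x | square x /\ ~ is_best Phi x (sigma x)].

Definition equilibrium (sigma : R * R -> role K) : Prop :=
  ae_best_response sigma (Phi_of sigma).

End Model.

(* Main.v *)
Require Import Defs.
From HB Require Import structures.
From mathcomp Require Import all_boot all_order all_algebra.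
From mathcomp Require Import all_classical all_reals all_analysis.
From mathcomp Require Import ring lra.
Import Order.TTheory GRing.Theory Num.Theory.
Local Open Scope classical_set_scope.
Local Open Scope ring_scope.

Section Aux.
Variable R : realType.

Lemma affine_meas (a b d : R) :
  measurable_fun setT (fun x : R * R => a * x.1 + b * x.2 + d).
Proof.
apply: measurable_realfun.measurable_funD; last exact: measurable_cst.
apply: measurable_realfun.measurable_funD.
  apply: measurable_realfun.measurable_funM; first exact: measurable_cst.
  exact: measurable_fst.
apply: measurable_realfun.measurable_funM; first exact: measurable_cst.
exact: measurable_snd.
Qed.

Lemma square_meas : measurable (@square R).
Proof.
have -> : @square R = `[0, 1]%classic `*` `[0, 1]%classic.
  apply/seteqP; split => x /=; rewrite /square /= !in_itv /=; by [].
apply: measurableX; exact: measurable_itv.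
Qed.

Lemma line_meas (a b d : R) :
  measurable [set x : R * R | a * x.1 + b * x.2 + d = 0].
Proof.
have := affine_meas a b d measurableT _ (measurable_set1 0).
by rewrite setTI.
Qed.

Lemma line_negl (a b d : R) : a != 0 \/ b != 0 ->
  (@leb2 R).-negligible [set x | square x /\ a * x.1 + b * x.2 + d = 0].
Proof.
have [b0|b0] := eqVneq b 0.
  case=> [a0|//].
  exists ([set - d / a] `*` `[0, 1]%classic); split.
  - apply: measurableX; [exact: measurable_set1|exact: measurable_itv].
  - rewrite /leb2 product_measure1E; [|exact: measurable_set1|exact: measurable_itv].
    transitivity (0 * lebesgue_measure (`[0%R, 1%R]%classic : set R))%E; last by rewrite mul0e.
    congr (_ * _)%E; exact: lebesgue_measure_set1.
  - move=> x [[_ /andP[y0 y1]]]; rewrite b0 mul0r addr0 => e /=.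
    split; last by rewrite in_itv /= y0 y1.
    apply/eqP; rewrite eq_sym; apply/eqP.
    apply: (mulfI a0); rewrite mulrCA divff // mulr1; lra.
move=> _.
exists [set x : R * R | a * x.1 + b * x.2 + d = 0]; split.
- exact: line_meas.
- rewrite /leb2 /product_measure1 /=.
  rewrite (eq_integral (fun _ => 0%E)); first by rewrite integral0.
  move=> x _ /=.
  apply/eqP; rewrite eq_le measure_ge0 andbT.
  rewrite -(lebesgue_measure_set1 ((- d - a * x) / b)).
  apply: le_measure; rewrite ?inE.
  + exact: measurable_xsection (line_meas a b d).
  + exact: measurable_set1.
  + move=> y; rewrite /xsection /= inE /= => e.
    apply: (mulIf b0); rewrite mulrVK ?unitfE //; lra.
- by move=> x [].
Qed.

Definition L2 := (@leb2 R : {measure set _ -> \bar R}).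

End Aux.
Arguments affine_meas {R}.
Arguments square_meas {R}.
Arguments line_meas {R}.
Arguments line_negl {R}.

Section Main.
Variables (R : realType) (K : nat) (q : 'I_K -> R) (f g h : R -> R) (w s p : R).
Hypotheses (q_pos : forall k, 0 < q k)
  (q_incr : forall k l : 'I_K, (k < l)%N -> q k < q l)
  (f_incr : forall x y : R, 0 < x -> x < y -> f x < f y)
  (g_incr : forall x y : R, 0 < x -> x < y -> g x < g y)
  (f_pos : forall x : R, 0 < x -> 0 < f x)
  (g_pos : forall x : R, 0 < x -> 0 < g x)
  (w_pos : 0 < w).

Definition c1 (o : role K) : R :=
  match o with RoleS k | RoleR k => w * f (q k) | RoleA => 0 end.
Definition c2 (o : role K) : R :=
  match o with RoleS k => - g (q k) | _ => 0 end.
Definition c0 (Phi : 'I_K -> R) (o : role K) : R :=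
  match o with RoleS k => Phi k | RoleR k => - s - p * h (q k) | RoleA => 0 end.

Lemma payoffE Phi x o :
  payoff q f g h w s p Phi x o = c1 o * x.1 + c2 o * x.2 + c0 Phi o.
Proof. case: o => [k|k|] /=; ring. Qed.

Lemma fg_neq (k l : 'I_K) : k <> l -> f (q k) != f (q l) /\ g (q k) != g (q l).
Proof.
move=> kl; have [lt|gt|e] := ltngtP k l.
- have H := q_incr _ _ lt.
  by rewrite !lt_eqF // ?f_incr ?g_incr.
- have H := q_incr _ _ gt.
  by rewrite !gt_eqF // ?f_incr ?g_incr.
- by case: kl; apply: val_inj.
Qed.

Lemma coef_neq o o' : o <> o' -> c1 o - c1 o' != 0 \/ c2 o - c2 o' != 0.
Proof.
have gp k : 0 < g (q k) := g_pos _ (q_pos k).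
have fp k : 0 < w * f (q k) := mulr_gt0 w_pos (f_pos _ (q_pos k)).
case: o => [k|k|]; case: o' => [l|l|] //= ol.
- right; have [_ /eqP H] : f (q k) != f (q l) /\ g (q k) != g (q l)
    by apply: fg_neq => e; apply: ol; rewrite e.
  apply/eqP => E; apply: H; lra.
- right; apply/eqP => E; have := gp k; lra.
- right; apply/eqP => E; have := gp k; lra.
- right; apply/eqP => E; have := gp l; lra.
- left; have [/eqP H _] : f (q k) != f (q l) /\ g (q k) != g (q l)
    by apply: fg_neq => e; apply: ol; rewrite e.
  rewrite -mulrBr mulf_eq0 negb_or gt_eqF //= subr_eq0; exact/eqP.
- left; apply/eqP => E; have := fp k; lra.
- right; apply/eqP => E; have := gp l; lra.
- left; apply/eqP => E; have := fp l; lra.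
Qed.

Local Notation payoff := (payoff q f g h w s p).
Local Notation is_best := (is_best q f g h w s p).

Lemma tie_negl Phi o o' : o <> o' ->
  (@leb2 R).-negligible [set x | square x /\ payoff Phi x o = payoff Phi x o'].
Proof.
move=> oo'.
have L := line_negl _ _ (c0 Phi o - c0 Phi o') (coef_neq _ _ oo').
refine (@negligibleS _ _ _ (L2 R) _ _ _ L).
move=> x [sq e]; split => //; move: e; rewrite !payoffE; lra.
Qed.

Lemma le_negl (A B N : set (R * R)) : measurable A -> measurable B ->
  (@leb2 R).-negligible N -> A `<=` B `|` N -> (leb2 A <= leb2 B)%E.
Proof.
move=> mA mB [N' [mN' N'0 NN']] AB.
have sub : A `<=` B `|` N' by move=> x /AB [?|/NN' ?]; [left|right].
have mBN : measurable (B `|` N') by apply: measurableU.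
have := @le_measure _ _ _ (L2 R) _ _ (mem_set mA) (mem_set mBN) sub.
move/le_trans; apply.
have := @measureU2 _ _ _ (L2 R) _ _ mB mN'.
move/le_trans; apply.
change (leb2 B + leb2 N' <= leb2 B)%E.
by rewrite N'0 adde0.
Qed.

Lemma best_meas Phi o : measurable [set x | square x /\ is_best Phi x o].
Proof.
have mle o' : measurable [set x : R * R | payoff Phi x o' <= payoff Phi x o].
  rewrite -[X in measurable X]setTI.
  apply: measurable_fun_le => //.
    by under eq_fun do rewrite payoffE; exact: affine_meas.
  by under eq_fun do rewrite payoffE; exact: affine_meas.
have -> : [set x | square x /\ is_best Phi x o] =
   @square R `&` ((\bigcap_(k in [set: 'I_K]) [set x | payoff Phi x (RoleS k) <= payoff Phi x o])
   `&` (\bigcap_(k in [set: 'I_K]) [set x | payoff Phi x (RoleR k) <= payoff Phi x o])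
   `&` [set x | payoff Phi x RoleA <= payoff Phi x o]).
  apply/seteqP; split => x /=.
    move=> [sq b]; split => //; split; first split.
    - by move=> k _; exact: (b (RoleS k)).
    - by move=> k _; exact: (b (RoleR k)).
    - exact: (b RoleA).
  move=> [sq [[bS bR] bA]]; split => // -[k|k|].
  - exact: (bS k I).
  - exact: (bR k I).
  - exact: bA.
apply: measurableI; first exact: square_meas.
apply: measurableI; last exact: mle.
apply: measurableI; apply: fin_bigcap_measurable; by [exact: finite_finset|move=> k _; exact: mle].
Qed.

Lemma fin_negl (F : 'I_K -> set (R * R)) :
  (forall k, (@leb2 R).-negligible (F k)) ->
  (@leb2 R).-negligible (\bigcup_(k in [set: 'I_K]) F k).
Proof.
move=> Fn.
pose G (n : nat) := if (insub n : option 'I_K) is Some k then F k else set0.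
apply: (@negligibleS _ _ _ (L2 R) (\bigcup_n G n)).
  move=> x [k _ Fx]; exists (val k) => //.
  by rewrite /G valK.
apply: (@negligible_bigcup _ _ _ (L2 R)) => n; rewrite /G.
by case: (insub n) => [k|]; [exact: Fn|exact: (negligible_set0 (L2 R))].
Qed.

Lemma share_eq Phi (sigma : R * R -> role K)
  (sm : forall o : role K, measurable (sigma @^-1` [set o])) :
  ae_best_response q f g h w s p sigma Phi -> forall o,
  leb2 (sigma @^-1` [set o] `&` @square R) = leb2 [set x | square x /\ is_best Phi x o].
Proof.
move=> hN o.
set N1 := [set x | square x /\ ~ is_best Phi x (sigma x)].
have mA : measurable (sigma @^-1` [set o] `&` @square R).
  by apply: measurableI; [exact: sm|exact: square_meas].
pose T o' := [set x | square x /\ o' <> o /\ payoff Phi x o = payoff Phi x o'].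
have Tn o' : (@leb2 R).-negligible (T o').
  have [->|ne] := pselect (o' = o).
    by apply: (@negligibleS _ _ _ (L2 R) _ _ _ (negligible_set0 (L2 R))) => x [_ []].
  apply: (@negligibleS _ _ _ (L2 R) _ _ _ (tie_negl Phi _ _ (nesym ne))).
  by move=> x [sq [_ e]].
set N2 := [set x | square x /\ exists o', o' <> o /\ payoff Phi x o = payoff Phi x o'].
have N2n : (@leb2 R).-negligible N2.
  apply: (@negligibleS _ _ _ (L2 R) ((\bigcup_(k in [set: 'I_K]) T (RoleS k))
     `|` (\bigcup_(k in [set: 'I_K]) T (RoleR k)) `|` T RoleA)).
    move=> x [sq [[k|k|] [ne e]]].
    - by left; left; exists k.
    - by left; right; exists k.
    - by right.
  apply: (@negligibleU _ _ _ (L2 R)); last exact: Tn.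
  by apply: (@negligibleU _ _ _ (L2 R)); apply: fin_negl => k; exact: Tn.
apply/eqP; rewrite eq_le; apply/andP; split.
  apply: (le_negl _ _ _ mA (best_meas Phi o) hN).
  move=> x [sx sq]; have [b|nb] := pselect (is_best Phi x o).
    by left.
  by right; split => //; rewrite sx.
apply: (le_negl _ _ _ (best_meas Phi o) mA (@negligibleU _ _ _ (L2 R) _ _ hN N2n)).
move=> x [sq b].
have [so|ne] := pselect (sigma x = o).
  by left.
have [bs|nbs] := pselect (is_best Phi x (sigma x)); last by right; left.
right; right; split => //; exists (sigma x); split => //.
by apply/eqP; rewrite eq_le b bs.
Qed.

Lemma Phi_of_eq Phi (sigma : R * R -> role K)
  (sm : forall o : role K, measurable (sigma @^-1` [set o])) :
  ae_best_response q f g h w s p sigma Phi ->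
  Phi_of q h p sigma = Phi_tilde q f g h w s p Phi.
Proof.
move=> hae; rewrite /Phi_of /Phi_tilde; congr avg_benefit; apply/funext => i.
  rewrite /share (share_eq _ _ sm hae); congr (fine (leb2 _)).
  by apply/seteqP; split => x /=; [move=> [sq b]; split|move=> [[]]].
rewrite /share (share_eq _ _ sm hae); congr (fine (leb2 _)).
by apply/seteqP; split => x /=; [move=> [sq b]; split|move=> [[]]].
Qed.

End Main.

Theorem proposition7 (R : realType) (K : nat) (q : 'I_K -> R)
  (f g h : R -> R) (w s p : R)
  (q_pos : forall k, 0 < q k)
  (q_incr : forall k l : 'I_K, (k < l)%N -> q k < q l)
  (f_incr : forall x y : R, 0 < x -> x < y -> f x < f y)
  (g_incr : forall x y : R, 0 < x -> x < y -> g x < g y)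
  (h_incr : forall x y : R, 0 < x -> x < y -> h x < h y)
  (f_pos : forall x : R, 0 < x -> 0 < f x)
  (g_pos : forall x : R, 0 < x -> 0 < g x)
  (w_pos : 0 < w) (s_ge0 : 0 <= s) (p_ge0 : 0 <= p)
  (sigma : R * R -> role K)
  (sigma_meas : forall o : role K, measurable (sigma @^-1` [set o])) :
  (equilibrium q f g h w s p sigma ->
     forall k, Phi_of q h p sigma k = Phi_tilde q f g h w s p (Phi_of q h p sigma) k)
  /\
  (forall Phi : 'I_K -> R,
     (forall k, Phi k = Phi_tilde q f g h w s p Phi k) ->
     ae_best_response q f g h w s p sigma Phi ->
     equilibrium q f g h w s p sigma /\ Phi_of q h p sigma = Phi).
Proof.
have E := @Phi_of_eq R K q f g h w s p q_pos q_incr f_incr g_incr f_pos g_pos w_pos.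
split.
  by move=> eq k; rewrite -(E _ _ sigma_meas eq).
move=> Phi hfix hae.
have PE : Phi_of q h p sigma = Phi.
  by rewrite (E _ _ sigma_meas hae); apply/funext => k; rewrite -hfix.
by split => //; rewrite /equilibrium PE.
Qed.
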